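(* Consider the resilient constrained consensus algorithm described in the context with exactly $f$ Byzantine agents, i.e. $|\mathcal F| = f$, and a fixed step size $\alpha>0$. Suppose that for every choice of initial states $x_i(0)\in\mathcal X_i$ ($i\in\mathcal H$), every behaviour of the Byzantine agents and every tie-breaking in the filtering step, all normal agents reach a consensus at some point of $\mathcal X=\bigcap_{i\in\mathcal H}\mathcal X_i$, meaning there exists $z\in\mathcal X$ with $x_i(t)\to z$ as $t\to\infty$ for all $i\in\mathcal H$. Then the set of normal agents $\mathcal H$ is $2f$-redundant.
   Context: Setting: There are $n$ agents $\mathcal N=\{1,\dots,n\}$, and every agent can communicate with every other agent (complete graph). An integer $f\ge 0$ is known to all agents. The agents are partitioned into normal agents $\mathcal H$ and Byzantine agents $\mathcal F$ with $|\mathcal F|\le f$, so $|\mathcal H|\ge n-f$. Which agents are Byzantine is unknown to the normal agents. Each normal agent $i\in\mathcal H$ has a nonempty closed convex set $\mathcal X_i\subseteq\mathbb R^m$, and $\mathcal X=\bigcap_{i\in\mathcal H}\mathcal X_i$ is nonempty. Each normal agent's state is constrained to lie in $\mathcal X_i$; in particular $x_i(0)\in\mathcal X_i$. Algorithm (discrete time $t=0,1,2,\dots$): each normal agent $i$ has a state $x_i(t)\in\mathbb R^m$. At time $t$, agent $i$ receives a vector $x_{ji}(t)$ from each $j\in\mathcal N\setminus\{i\}$. If $j\in\mathcal H$, then $x_{ji}(t)=x_j(t)$. If $j\in\mathcal F$, then $x_{ji}(t)$ is arbitrary and may differ for different recipients. Agent $i$ discards the $f$ received vectors with the largest Euclidean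 distance $\|x_i(t)-x_{ji}(t)\|$, with ties broken arbitrarily. Let $\mathcal M_i(t)\subseteq\mathcal N\setminus\{i\}$ be the set of the remaining $n-f-1$ senders. The update is $$x_i(t+1)=\mathrm P_{\mathcal X_i}\Big[x_i(t)+\alpha\sum_{j\in\mathcal M_i(t)}(x_{ji}(t)-x_i(t))\Big],$$ where $\alpha>0$ and $\mathrm P_{\mathcal C}[x]=\arg\min_{y\in\mathcal C}\|x-y\|$ is the Euclidean projection. Definition: $\mathcal H$ is $k$-redundant if for every $\mathcal S\subseteq\mathcal H$ with $|\mathcal S|\ge n-k$ we have $\bigcap_{i\in\mathcal S}\mathcal X_i=\bigcap_{i\in\mathcal H}\mathcal X_i$. *)

(* Defs.v *)
From HB Require Import structures.
From mathcomp Require Import all_boot all_order all_algebra.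
From mathcomp Require Import reals.
Set Implicit Arguments. Unset Strict Implicit. Unset Printing Implicit Defensive.
Import Order.TTheory GRing.Theory Num.Theory.
Local Open Scope ring_scope.

Section Defs.
Variables (R : realType) (m : nat).

Definition enorm (v : 'rV[R]_m) : R := Num.sqrt (\sum_(k < m) (v 0 k) ^+ 2).

Definition eclosed (C : 'rV[R]_m -> Prop) : Prop :=
  forall x, (forall e : R, 0 < e -> exists2 y, C y & enorm (x - y) < e) -> C x.

Definition convex (C : 'rV[R]_m -> Prop) : Prop :=
  forall x y (t : R), C x -> C y -> 0 <= t -> t <= 1 -> C (t *: x + (1 - t) *: y).

Definition is_proj (C : 'rV[R]_m -> Prop) (x y : 'rV[R]_m) : Prop :=
  C y /\ forall z, C z -> enorm (x - y) <= enorm (x - z).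

Definition converges_to (u : nat -> 'rV[R]_m) (z : 'rV[R]_m) : Prop :=
  forall e : R, 0 < e -> exists T : nat, forall t, (T <= t)%N -> enorm (u t - z) < e.
End Defs.

Section Algo.
Variables (R : realType) (n m f : nat).

(* [valid_run H X alpha x msg M]: x t i is the state of agent i at time t,
   msg t j i is the vector x_{ji}(t) that agent i receives from j at time t,
   M t i is the set M_i(t) of senders kept after filtering.
   Only the states of normal agents (i \in H) are meaningful. *)
Definition valid_run (H : {set 'I_n}) (X : 'I_n -> 'rV[R]_m -> Prop) (alpha : R)
    (x : nat -> 'I_n -> 'rV[R]_m) (msg : nat -> 'I_n -> 'I_n -> 'rV[R]_m)
    (M : nat -> 'I_n -> {set 'I_n}) : Prop :=
  (forall i, i \in H -> X i (x 0%N i)) /\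
  (* normal senders transmit their true state; Byzantine messages are arbitrary *)
  (forall t i j, j \in H -> msg t j i = x t j) /\
  (* filtering: keep n-f-1 senders other than i, discarding the f farthest
     (ties broken arbitrarily) *)
  (forall t i, i \in H ->
     [/\ M t i \subset ~: [set i],
         #|M t i| = (n - f - 1)%N &
         forall j k, j \in M t i -> k != i -> k \notin M t i ->
           enorm (x t i - msg t j i) <= enorm (x t i - msg t k i)]) /\
  (forall t i, i \in H ->
     is_proj (X i) (x t i + alpha *: \sum_(j in M t i) (msg t j i - x t i))
             (x t.+1 i)).

Definition k_redundant (H : {set 'I_n}) (X : 'I_n -> 'rV[R]_m -> Prop) (k : nat) : Prop :=
  forall S : {set 'I_n}, S \subset H -> (n - k <= #|S|)%N ->
    forall v, (forall i, i \in S -> X i v) <-> (forall i, i \in H -> X i v).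
End Algo.

(* Main.v *)
Require Import Defs.
From HB Require Import structures.
From mathcomp Require Import all_boot all_order all_algebra.
From mathcomp Require Import reals.
From mathcomp Require Import boolp classical_sets topology normedtype sequences.
From mathcomp Require Import ring lra zify.
Import Order.TTheory GRing.Theory Num.Theory.
Import numFieldNormedType.Exports.
Local Open Scope ring_scope.
Local Open Scope classical_set_scope.

Section Proj.
Variables (R : realType) (m : nat).
Implicit Types (a b v w : 'rV[R]_m).

Definition N2 v : R := \sum_(k < m) (v 0 k) ^+ 2.

Lemma N2_ge0 v : 0 <= N2 v.
Proof. by apply: sumr_ge0 => k _; exact: sqr_ge0. Qed.

Lemma enormE v : enorm v = Num.sqrt (N2 v).
Proof. by []. Qed.

Lemma enorm_ge0 v : 0 <= enorm v.
Proof. exact: sqrtr_ge0. Qed.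

Lemma enorm_leP a b : (enorm a <= enorm b) = (N2 a <= N2 b).
Proof. by rewrite !enormE ler_sqrt // N2_ge0. Qed.

Lemma enorm_ltP v e : 0 < e -> N2 v < e ^+ 2 -> enorm v < e.
Proof.
move=> e0 h; rewrite enormE -(ger0_norm (ltW e0)) -sqrtr_sqr ltr_sqrt //.
by rewrite exprn_gt0.
Qed.

Lemma N2_0 : N2 (0 : 'rV[R]_m) = 0.
Proof. by rewrite /N2 big1 // => k _; rewrite mxE expr0n. Qed.

Lemma enorm0 : enorm (0 : 'rV[R]_m) = 0.
Proof. by rewrite enormE N2_0 sqrtr0. Qed.

Lemma N2_eq0 v : N2 v = 0 -> v = 0.
Proof.
move=> h; apply/rowP => k; rewrite mxE.
have : (v 0 k) ^+ 2 <= N2 v.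
  rewrite /N2 (bigD1 k) //= lerDl; apply: sumr_ge0 => j _; exact: sqr_ge0.
rewrite h => h2; apply/eqP; rewrite -sqrf_eq0 eq_le h2 sqr_ge0 //.
Qed.

Lemma N2_coord v k : (v 0 k) ^+ 2 <= N2 v.
Proof. rewrite /N2 (bigD1 k) //= lerDl; apply: sumr_ge0 => j _; exact: sqr_ge0. Qed.

Lemma N2_opp a b : N2 (a - b) = N2 (b - a).
Proof. by apply: eq_bigr => k _; rewrite !mxE -sqrrN opprB. Qed.

Lemma parallelogram x a b :
  N2 (a - b) + 4 * N2 (x - (2^-1 *: a + (1 - 2^-1) *: b)) =
  2 * N2 (x - a) + 2 * N2 (x - b).
Proof.
rewrite /N2 !mulr_sumr -!big_split /=; apply: eq_bigr => k _; rewrite !mxE.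
by field.
Qed.

Lemma N2_cvg (a : nat -> 'rV[R]_m) (A : 'rV[R]_m) :
  (forall c, (fun l => a l 0 c) @ \oo --> A 0 c) ->
  forall b, (fun l => N2 (b - a l)) @ \oo --> N2 (b - A).
Proof.
move=> hc b; rewrite /N2.
apply: cvg_big => //; first exact: add_continuous.
move=> k _.
have -> : (fun l => ((b - a l) 0 k)^+2) = (fun l => (b 0 k - a l 0 k) * (b 0 k - a l 0 k)).
  by apply: funext => l; rewrite !mxE expr2.
rewrite !mxE expr2; apply: cvgM; apply: cvgB => //; exact: cvg_cst.
Qed.

Lemma abs_lt_sq (a e : R) : 0 < e -> a ^+ 2 < e ^+ 2 -> `|a| < e.
Proof.
move=> e0 h; have : Num.sqrt (a ^+ 2) < Num.sqrt (e ^+ 2) by rewrite ltr_sqrt // exprn_gt0.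
by rewrite !sqrtr_sqr (ger0_norm (ltW e0)).
Qed.

Lemma harm_small (eps : R) : 0 < eps -> exists K : nat, forall k, (K <= k)%N -> k.+1%:R^-1 < eps.
Proof.
move=> e0; have := cvgr_dist_lt _ _ (@cvg_harmonic R) _ e0.
move=> [K _ HK]; exists K => k Kk.
by have := HK k Kk; rewrite /= sub0r normrN ger0_norm // invr_ge0 ler0n.
Qed.


Lemma proj_exists (C : 'rV[R]_m -> Prop) :
  (exists v, C v) -> eclosed C -> Defs.convex C -> forall x, exists y, is_proj C x y.
Proof.
move=> [v0 Cv0] clC cvC x.
pose E := [set r : R | exists2 y, C y & r = N2 (x - y)].
have hE : has_inf E.
  split; first by exists (N2 (x - v0)); exists v0.
  by exists 0 => r [y _ ->]; exact: N2_ge0.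
set d := inf E.
have dle : forall y, C y -> d <= N2 (x - y).
  by move=> y Cy; apply: (ge_inf hE.2); exists y.
pose h := fun k : nat => (k.+1%:R^-1 : R).
have hpos : forall k, 0 < h k by move=> k; rewrite /h invr_gt0 ltr0n.
have hdec : forall k l, (k <= l)%N -> h l <= h k.
  by move=> k l kl; rewrite /h lef_pV2 ?posrE ?ltr0n // ler_nat.
have approx : forall k : nat, exists y, C y /\ N2 (x - y) < d + h k.
  move=> k; have [r [y Cy ->] lt] := inf_adherent (hpos k) hE.
  by exists y.
have [ys hys] := choice approx.
have key : forall k l, N2 (ys k - ys l) <= 2 * h k + 2 * h l.
  move=> k l.
  have [Ck lk] := hys k; have [Cl ll] := hys l.
  have mid := cvC (ys k) (ys l) 2^-1 Ck Cl.
  have /dle dm : C (2^-1 *: ys k + (1 - 2^-1) *: ys l).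
    by apply: mid; rewrite ?invr_ge0 ?ler0n // invf_le1 ?ler1n.
  have := parallelogram x (ys k) (ys l).
  lra.
have key2 : forall k l, (k <= l)%N -> N2 (ys k - ys l) <= 4 * h k.
  move=> k l kl; apply: (le_trans (key k l)); have := hdec _ _ kl; lra.
have cauchyc : forall c, cvg ((fun k => ys k 0 c) @ \oo).
  move=> c; apply/cauchy_cvgP; apply/cauchy_exP => e e0.
  have e20 : 0 < e ^+ 2 / 4 by rewrite divr_gt0 // exprn_gt0.
  have [K HK] := harm_small _ e20.
  exists (ys K 0 c); exists K => // k /= Kk.
  rewrite -ball_normE /ball_ /=; apply: abs_lt_sq => //.
  have := N2_coord (ys K - ys k) c; rewrite !mxE.
  have := key2 _ _ Kk; have := HK K (leqnn K); rewrite -/(h K).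
  lra.
pose w := \row_c lim ((fun k => ys k 0 c) @ \oo).
have hcv : forall c, (fun l => ys l 0 c) @ \oo --> w 0 c.
  by move=> c; rewrite mxE; exact: cauchyc.
have wle : forall k, N2 (w - ys k) <= 4 * h k.
  move=> k; rewrite N2_opp.
  apply: (ler_cvg_to (N2_cvg _ _ hcv (ys k)) (cvg_cst _)).
  by exists k => // l /= kl; exact: key2.
have Cw : C w.
  apply: clC => e e0.
  have e20 : 0 < e ^+ 2 / 4 by rewrite divr_gt0 // exprn_gt0.
  have [K HK] := harm_small _ e20.
  exists (ys K); first by have [] := hys K.
  apply: enorm_ltP => //; have := wle K; have := HK K (leqnn K); rewrite -/(h K).
  lra.
exists w; split => // z Cz; rewrite enorm_leP; apply: le_trans (dle z Cz).
have c2 := N2_cvg _ _ hcv x.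
have c3 : (fun l => d + harmonic l) @ \oo --> d + 0.
  by apply: cvgD; [exact: cvg_cst | exact: cvg_harmonic].
rewrite -[d]addr0; apply: (ler_cvg_to c2 c3).
by apply: nearW => l /=; have [_ /ltW] := hys l.
Qed.


Lemma enorm_eq0 w : enorm w = 0 -> w = 0.
Proof.
rewrite enormE => /eqP; rewrite sqrtr_eq0 => h; apply: N2_eq0.
by apply/eqP; rewrite eq_le h N2_ge0.
Qed.

Lemma proj_self (C : 'rV[R]_m -> Prop) x y : is_proj C x y -> C x -> y = x.
Proof.
move=> [_ h] Cx; have := h x Cx; rewrite subrr enorm0 => h0.
have : enorm (x - y) = 0 by apply/eqP; rewrite eq_le h0 enorm_ge0.
by move/enorm_eq0/eqP; rewrite subr_eq0 => /eqP ->.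
Qed.

End Proj.

Lemma subset_card (T : finType) (A : {set T}) k :
  (k <= #|A|)%N -> exists2 B : {set T}, B \subset A & #|B| = k.
Proof.
elim: k => [|k IH] hk.
  exists (@finset.set0 T); [exact: finset.sub0set | exact: finset.cards0].
have [B BA cB] := IH (ltnW hk).
have : (0 < #|A :\: B|)%N by rewrite cardsDS // cB subn_gt0.
rewrite card_gt0 => /set0Pn [y]; rewrite inE => /andP [yB yA].
exists (y |: B); first by rewrite finset.subUset finset.sub1set yA BA.
by rewrite cardsU1 yB cB.
Qed.

Lemma exists_argmax (R : realType) (I : finType) (A : {pred I}) (g : I -> R) k0 :
  k0 \in A -> exists2 k, k \in A & forall j, j \in A -> g j <= g k.
Proof.
move=> k0A; case: (@arg_maxP _ R I k0 A g k0A) => k kA hk.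
by exists k.
Qed.

Theorem theorem1 (R : realType) (n m f : nat) (H : {set 'I_n})
    (X : 'I_n -> 'rV[R]_m -> Prop) (alpha : R) :
  (2 * f < n)%N ->
  #|~: H| = f ->
  (forall i, i \in H -> exists v, X i v) ->
  (forall i, i \in H -> eclosed (X i)) ->
  (forall i, i \in H -> convex (X i)) ->
  (exists v, forall i, i \in H -> X i v) ->
  0 < alpha ->
  (forall (x : nat -> 'I_n -> 'rV[R]_m) (msg : nat -> 'I_n -> 'I_n -> 'rV[R]_m)
          (M : nat -> 'I_n -> {set 'I_n}),
      valid_run f H X alpha x msg M ->
      exists2 z, (forall i, i \in H -> X i z) &
                 forall i, i \in H -> converges_to (fun t => x t i) z) ->
  k_redundant H X (2 * f).
Proof.
move=> hn hF hne hcl hcv [u hu] ha hyp S SH hS v.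
split; last by move=> hv i iS; apply: hv; exact: (fintype.subsetP SH).
move=> hvS.
have cardH : #|H| = (n - f)%N.
  by have h := cardsC H; rewrite card_ord hF in h; lia.
have [s0 s0S] : exists s0, s0 \in S.
  have : (0 < #|S|)%N by apply: leq_trans hS; rewrite subn_gt0.
  by rewrite card_gt0 => /set0Pn.
have pe : forall p : 'I_n * 'rV[R]_m, exists y, p.1 \in H -> is_proj (X p.1) p.2 y.
  move=> [i y] /=; case: (boolP (i \in H)) => Hi.
    by have [p hp] := @proj_exists R m (X i) (hne _ Hi) (hcl _ Hi) (hcv _ Hi) y; exists p.
  by exists 0.
have [P hP] := choice pe.
have pe2 : forall p : ('I_n -> 'rV[R]_m) * 'I_n, exists k,
    (exists k0, k0 \in H :\ p.2) ->
    k \in H :\ p.2 /\ forall j, j \in H :\ p.2 -> enorm (p.1 p.2 - p.1 j) <= enorm (p.1 p.2 - p.1 k).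
  move=> [sx i] /=; case: (boolP [exists k0, k0 \in H :\ i]).
    move=> /existsP [k0 hk0].
    have [k hk1 hk2] := @exists_argmax R _ (mem (H :\ i)) (fun j => enorm (sx i - sx j)) k0 hk0.
    by exists k.
  move=> hno; exists i => [[k0 hk0]]; exfalso; move/negP: hno; apply.
  by apply/existsP; exists k0.
have [far hfar] := choice pe2.
have pe3 : forall i, exists2 B : {set 'I_n}, B \subset (S :\ i) :|: ~: H & (i \in S -> #|B| = (n - f - 1)%N).
  move=> i; case: (boolP (i \in S)) => iS; last by exists (finset.set0); rewrite ?finset.sub0set.
  suff hk : (n - f - 1 <= #|(S :\ i) :|: ~: H|)%N.
    by have [B h1 h2] := @subset_card _ _ _ hk; exists B.
  rewrite cardsU.
  have -> : (S :\ i) :&: ~: H = finset.set0.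
    apply/setP => j; rewrite !inE.
    case: (boolP (j \in S)) => jS; last by rewrite andbF.
    by rewrite (fintype.subsetP SH j jS) andbF.
  rewrite finset.cards0 subn0 hF.
  have := cardsD1 i S; rewrite iS add1n => hc.
  move: hS; rewrite hc; lia.
have pe3' : forall i, exists B : {set 'I_n}, B \subset (S :\ i) :|: ~: H /\ (i \in S -> #|B| = (n - f - 1)%N).
  by move=> i; have [B h1 h2] := pe3 i; exists B.
have [MS hMS] := choice pe3'.
pose msgf (sx : 'I_n -> 'rV[R]_m) (j i : 'I_n) :=
  if j \in H then sx j else if i \in S then v else sx (far (sx, i)).
pose Mset (i : 'I_n) := if i \in S then MS i else H :\ i.
pose step (sx : 'I_n -> 'rV[R]_m) := fun i =>
  if i \in H then P (i, sx i + alpha *: \sum_(j in Mset i) (msgf sx j i - sx i)) else sx i.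
pose x0 := fun i => if i \in S then v else u.
pose x := fun t => iter t step x0.
pose msg := fun t => msgf (x t).
pose M := fun (t : nat) => Mset.
have msgS : forall t i j, i \in S -> j \in MS i -> (forall k, k \in S -> x t k = v) -> msg t j i = v.
  move=> t i j iS jM IH; have [hsub _] := hMS i.
  have := fintype.subsetP hsub j jM; rewrite !inE => /orP [/andP [_ jS] | jH].
    by rewrite /msg /msgf (fintype.subsetP SH j jS) IH.
  by rewrite /msg /msgf (negbTE jH) iS.
have xS : forall t i, i \in S -> x t i = v.
  elim => [|t IH] i iS; first by rewrite /x /= /x0 iS.
  have Hi := fintype.subsetP SH i iS.
  have e : x t.+1 i = step (x t) i by [].
  rewrite e /step Hi.
  have -> : \sum_(j in Mset i) (msgf (x t) j i - x t i) = 0.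
    apply: big1 => j; rewrite /Mset iS => jM.
    by have := msgS t i j iS jM IH; rewrite /msg => ->; rewrite IH // subrr.
  rewrite scaler0 addr0 IH //.
  have hp := hP (i, v) Hi.
  exact: (@proj_self R m (X i) _ _ hp (hvS i iS)).
have vr : valid_run f H X alpha x msg M.
  split; [|split; [|split]].
  - move=> i Hi; rewrite /x /= /x0; case: ifP => iS; [exact: hvS | exact: hu].
  - by move=> t i j jH; rewrite /msg /msgf jH.
  - move=> t i Hi; rewrite /M /Mset; case: (boolP (i \in S)) => iS.
    + have [hsub hcard] := hMS i; split.
      * apply/fintype.subsetP => j jM; have := fintype.subsetP hsub j jM.
        rewrite !inE => /orP [/andP [ji _] | jH] //.
        by apply/eqP => eji; move: jH; rewrite eji Hi.
      * exact: hcard iS.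
      * move=> j k jM ki kM.
        rewrite (msgS t i j iS jM (xS t)) (xS t i iS) subrr enorm0.
        exact: enorm_ge0.
    + split.
      * by apply/fintype.subsetP => j; rewrite !inE => /andP [-> _].
      * by move: (cardsD1 i H); rewrite Hi cardH add1n => ->; rewrite subn1.
      * move=> j k jM ki kM.
        have kH : k \notin H by move: kM; rewrite !inE ki.
        have jH : j \in H by move: jM; rewrite !inE => /andP [].
        rewrite /msg /msgf (negbTE kH) (negbTE iS) jH.
        have [_ hf2] := hfar (x t, i) (ex_intro _ j jM).
        exact: hf2 j jM.
  - move=> t i Hi.
    have e : x t.+1 i = step (x t) i by [].
    rewrite e /step Hi.
    exact: (hP (i, _) Hi).
have [z hz hconv] := hyp x msg M vr.
have vz : v = z.
  have s0H := fintype.subsetP SH s0 s0S.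
  apply/eqP; rewrite -subr_eq0; apply/eqP; apply: enorm_eq0.
  apply/eqP; rewrite eq_le enorm_ge0 andbT leNgt; apply/negP => hpos.
  have [T hT] := hconv s0 s0H _ hpos.
  by have := hT T (leqnn T); rewrite /= xS // ltxx.
by move=> i Hi; rewrite vz; exact: hz.
Qed.
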